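(* Let $X$ be a finite simplicial complex, $d\ge0$, and $F:C_{d+1}(X)\to C_{d+1}(X)$ an arbitrary map. The system $\dot\theta=B_{d+1}F(B_{d+1}^\intercal\theta)$, seen as an ODE on $\operatorname{im}(B_{d+1})$, is conjugate to both systems on $\operatorname{im}(B_{d+1}^\intercal)$ $$\dot x=(B_{d+1}^\intercal B_{d+1})F(x)\quad\text{and}\quad\dot y=P_{d+1}F(B_{d+1}^\intercal B_{d+1}y).$$ Similarly, for an arbitrary map $H:C_{d-1}(X)\to C_{d-1}(X)$, the system $\dot\theta=B_d^\intercal H(B_d\theta)$, seen as an ODE on $\operatorname{im}(B_d^\intercal)$, is conjugate to both systems on $\operatorname{im}(B_d)$ $$\dot x=(B_dB_d^\intercal)H(x)\quad\text{and}\quad\dot y=Q_{d-1}H(B_dB_d^\intercal y).$$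
   Context: A finite simplicial complex $X$ on vertex set $\{1,\dots,n\}$ is a collection of nonempty subsets closed under taking nonempty subsets; $X_d$ is the set of simplices with $d+1$ vertices; a $d$-simplex with vertices $i_0<\dots<i_d$ is written $[i_0,\dots,i_d]$. $C_d(X)$ is the real vector space with basis $X_d$ and inner product making $X_d$ orthonormal ($C_{-1}(X)=0$). The boundary map is $\partial_d[i_0,\dots,i_d]=\sum_{k=0}^d(-1)^k[i_0,\dots,\widehat{i_k},\dots,i_d]$ with matrix $B_d$; $B_d^\intercal$ its transpose. $P_{d+1}$ is the orthogonal projection of $C_{d+1}(X)$ onto $\operatorname{im}(B_{d+1}^\intercal)$; $Q_{d-1}$ is the orthogonal projection of $C_{d-1}(X)$ onto $\operatorname{im}(B_d)$. ODEs $\dot u=A(u)$ on $U$ and $\dot v=C(v)$ on $V$ are conjugate if there is an invertible linear map $\Phi:U\to V$ with $\Phi\circ A=C\circ\Phi$. *)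

(* Defs.v *)
From HB Require Import structures.
From mathcomp Require Import all_boot all_order all_algebra.
From mathcomp Require Import reals.
Set Implicit Arguments. Unset Strict Implicit. Unset Printing Implicit Defensive.
Import Order.TTheory GRing.Theory Num.Theory.
Local Open Scope ring_scope.

(* A finite simplicial complex on the vertex set 'I_n = {0,..,n-1}
   (a relabelling of {1,..,n} preserving the order). *)
Definition simplicial_complex (n : nat) (X : {set {set 'I_n}}) : Prop :=
  set0 \notin X /\
  forall s t : {set 'I_n}, s \in X -> t \subset s -> t != set0 -> t \in X.

(* Simplices with exactly e vertices: Xv X (d+1) = X_d.  Since set0 \notin X,
   Xv X 0 is empty, which encodes C_{-1}(X) = 0. *)
Definition Xv (n : nat) (X : {set {set 'I_n}}) (e : nat) : {set {set 'I_n}} :=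
  [set s in X | #|s| == e].

(* Matrix of the boundary map B_d : C_d(X) -> C_{d-1}(X) in the bases
   X_d and X_{d-1} (rows indexed by X_{d-1} = Xv X d, columns by
   X_d = Xv X d.+1).  The coefficient of t in the boundary of s is
   (-1)^k when t = s minus its k-th smallest vertex v (k counted from 0),
   i.e. k = #{w in s | w < v}, and 0 otherwise. *)
Definition bnd (R : realType) (n : nat) (X : {set {set 'I_n}}) (d : nat)
  : 'M[R]_(#|Xv X d|, #|Xv X d.+1|) :=
  \matrix_(i < #|Xv X d|, j < #|Xv X d.+1|)
    let t : {set 'I_n} := @enum_val _ (mem (Xv X d)) i in
    let s : {set 'I_n} := @enum_val _ (mem (Xv X d.+1)) j in
    match [pick v in s :\: t] with
    | Some v => if t \subset s then (-1) ^+ #|[set w in s | (nat_of_ord w < nat_of_ord v)%N]| else 0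
    | None => 0
    end.

Definition colspace (R : realType) (m k : nat) (B : 'M[R]_(m, k)) (x : 'cV[R]_m)
  : Prop := exists y : 'cV[R]_k, x = B *m y.

Definition is_orth_proj (R : realType) (m : nat) (P : 'M[R]_m)
  (W : 'cV[R]_m -> Prop) : Prop :=
  (forall x, W (P *m x)) /\
  (forall x w : 'cV[R]_m, W w -> w^T *m (x - P *m x) = 0).

Definition conjugate (R : realType) (m k : nat)
  (U : 'cV[R]_m -> Prop) (V : 'cV[R]_k -> Prop)
  (A : 'cV[R]_m -> 'cV[R]_m) (C : 'cV[R]_k -> 'cV[R]_k) : Prop :=
  exists Phi : 'M[R]_(k, m),
    (forall u, U u -> V (Phi *m u)) /\
    (forall u1 u2, U u1 -> U u2 -> Phi *m u1 = Phi *m u2 -> u1 = u2) /\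
    (forall v, V v -> exists2 u, U u & Phi *m u = v) /\
    (forall u, U u -> Phi *m (A u) = C (Phi *m u)).

(* Main.v *)
Require Import Defs.
From HB Require Import structures.
From mathcomp Require Import all_boot all_order all_algebra.
From mathcomp Require Import reals.
Import Order.TTheory GRing.Theory Num.Theory.
Local Open Scope ring_scope.
From mathcomp Require Import zify.
Import Order.TTheory GRing.Theory Num.Theory.
Local Open Scope ring_scope.

Set Implicit Arguments. Unset Strict Implicit.
Section G.
Variable R : realType.

Lemma sqz p m (N : 'M[R]_(p,m)) : N *m N^T = 0 -> N = 0.
Proof.
move=> H; apply/matrixP=> i j; rewrite mxE.
have : (N *m N^T) i i = 0 by rewrite H mxE.
rewrite mxE => /psumr_eq0P H2.
have := H2 (fun l _ => ltac:(by rewrite mxE -expr2 sqr_ge0)) j isT.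
by rewrite mxE => /eqP; rewrite mulf_eq0 orbb => /eqP.
Qed.

Lemma sqzc p m (N : 'M[R]_(p,m)) : N^T *m N = 0 -> N = 0.
Proof. by move=> H; rewrite -[N]trmxK (@sqz _ _ N^T) ?trmx0 // trmxK. Qed.

Lemma kerG m k p (B : 'M[R]_(m,k)) (M : 'M[R]_(p,k)) :
  M *m (B^T *m B) = 0 -> M *m B^T = 0.
Proof.
move=> H; apply: sqz.
by rewrite trmx_mul trmxK mulmxA -(mulmxA M) H mul0mx.
Qed.

Lemma kerGc m k (B : 'M[R]_(m,k)) (y : 'cV[R]_k) :
  B^T *m B *m y = 0 -> B *m y = 0.
Proof.
move=> H.
have H1 : y^T *m (B^T *m B) = 0.
  by rewrite -[B^T *m B]trmxK trmx_mul trmxK -trmx_mul H trmx0.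
have := kerG H1; rewrite -trmx_mul => /(congr1 trmx); rewrite trmxK trmx0 //.
Qed.

Lemma rankG m k (B : 'M[R]_(m,k)) : (B <= B^T *m B)%MS.
Proof.
have sGB : (B^T *m B <= B)%MS by apply: submxMl.
rewrite -(mxrank_leqif_sup sGB).2.
have e1 : (kermx (B^T *m B) <= kermx B^T)%MS.
  by apply/sub_kermxP; apply: kerG; apply: mulmx_ker.
have e2 : (kermx B^T <= kermx (B^T *m B))%MS.
  by apply/sub_kermxP; rewrite mulmxA mulmx_ker mul0mx.
have := anti_leq (introT andP (conj (mxrankS e1) (mxrankS e2))).
rewrite !mxrank_ker mxrank_tr => E.
have h1 := rank_leq_row (B^T *m B).
have h2 := rank_leq_row B^T; rewrite mxrank_tr in h2.
apply/eqP; lia.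
Qed.

Lemma surjG m k (B : 'M[R]_(m,k)) (z : 'cV[R]_m) :
  exists y, B^T *m z = B^T *m B *m y.
Proof.
set G := B^T *m B.
have sG : (z^T *m B <= G)%MS := submx_trans (submxMl _ _) (rankG B).
have E := mulmxKpV sG.
exists (z^T *m B *m pinvmx G)^T.
have GT : G^T = G by rewrite /G trmx_mul trmxK.
apply: (can_inj (@trmxK _ _ _)).
rewrite trmx_mul [in RHS]trmx_mul trmxK GT.
by rewrite trmxK E.
Qed.

Lemma YG m k (B : 'M[R]_(m,k)) (a : 'cV[R]_k) :
  B^T *m B *m (pinvmx (B^T *m B))^T *m (B^T *m B *m a) = B^T *m B *m a.
Proof.
set G := B^T *m B.
have GT : G^T = G by rewrite /G trmx_mul trmxK.
have sG : (a^T *m G <= G)%MS := submxMl _ _.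
have E := mulmxKpV sG.
move: (pinvmx G) E => Y E.
apply: (can_inj (@trmxK _ _ _)).
rewrite !trmx_mul !trmxK -/G.
rewrite !mulmxA.
by move: E; rewrite /G !mulmxA.
Qed.

Lemma P1 m k (B : 'M[R]_(m,k)) (P : 'M[R]_k) :
  is_orth_proj P (colspace B^T) -> forall x : 'cV[R]_k, B *m (P *m x) = B *m x.
Proof.
move=> [_ HP] x.
have := HP x (B^T *m (B *m (x - P *m x))) (ex_intro _ (B *m (x - P *m x)) erefl).
rewrite trmx_mul trmxK -mulmxA => /sqzc /eqP.
by rewrite mulmxBr subr_eq0 => /eqP.
Qed.

Lemma P2 m k (B : 'M[R]_(m,k)) (P : 'M[R]_k) :
  is_orth_proj P (colspace B^T) -> forall v : 'cV[R]_k, colspace B^T v -> P *m v = v.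
Proof.
move=> [HW HP] v [a ->].
have [b Eb] := HW (B^T *m a).
have := HP (B^T *m a) (B^T *m (a - b)) (ex_intro _ _ erefl).
rewrite Eb -mulmxBr => /sqzc /eqP.
by rewrite mulmxBr subr_eq0 => /eqP.
Qed.

Lemma P3 m k (B : 'M[R]_(m,k)) (P : 'M[R]_k) :
  is_orth_proj P (colspace B^T) -> forall u : 'cV[R]_k, B *m u = 0 -> P *m u = 0.
Proof.
move=> [HW HP] u Bu.
have [b Eb] := HW u.
have := HP u (P *m u) (ex_intro _ _ Eb).
rewrite mulmxBr {1}Eb trmx_mul trmxK -mulmxA Bu mulmx0 sub0r => /eqP.
by rewrite oppr_eq0 => /eqP /sqzc.
Qed.

Lemma part m k (B : 'M[R]_(m,k)) (F : 'cV[R]_k -> 'cV[R]_k) (P : 'M[R]_k) :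
  is_orth_proj P (colspace B^T) ->
  conjugate (colspace B) (colspace B^T)
       (fun th => B *m F (B^T *m th))
       (fun x => (B^T *m B) *m F x)
  /\
  conjugate (colspace B) (colspace B^T)
       (fun th => B *m F (B^T *m th))
       (fun y => P *m F ((B^T *m B) *m y)).
Proof.
move=> HPo; split.
  exists B^T; split; [|split; [|split]].
  - by move=> _ [a ->]; exists (B *m a); rewrite mulmxA.
  - move=> _ _ [a1 ->] [a2 ->] E.
    apply/eqP; rewrite -subr_eq0 -mulmxBr; apply/eqP; apply: kerGc.
    by rewrite mulmxBr -!mulmxA E subrr.
  - move=> _ [z ->]; have [y Ey] := surjG B z.
    exists (B *m y); first by exists y.
    by rewrite mulmxA Ey.
  - by move=> u _; rewrite mulmxA.
set G := B^T *m B.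
set Y := (pinvmx G)^T.
have GP : forall x : 'cV[R]_k, G *m (P *m x) = G *m x.
  by move=> x; rewrite /G -!mulmxA (P1 HPo).
have KG : forall y : 'cV[R]_k, G *m y = 0 -> B *m y = 0 by move=> y; apply: kerGc.
have YG' : forall a : 'cV[R]_k, G *m Y *m (G *m a) = G *m a by move=> a; apply: YG.
have BtB : forall f : 'cV[R]_k, B^T *m (B *m f) = G *m f by move=> f; rewrite mulmxA.
have HW : forall x, colspace B^T (P *m x) by case: HPo.
have P2' := P2 HPo. have P3' := P3 HPo.
clearbody Y G.
have PYG : forall f : 'cV[R]_k, P *m (Y *m (G *m f)) = P *m f.
  move=> f; apply/eqP; rewrite -subr_eq0 -mulmxBr; apply/eqP; apply: P3'.
  apply: KG; rewrite mulmxBr mulmxA.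
  by rewrite YG' subrr.
have GPhi : forall a : 'cV[R]_k, G *m (P *m Y *m B^T *m (B *m a)) = G *m a.
  move=> a; rewrite -!mulmxA GP BtB mulmxA YG' //.
exists (P *m Y *m B^T); split; [|split; [|split]].
- by move=> u _; rewrite -!mulmxA; apply: HW.
- move=> _ _ [a1 ->] [a2 ->] E.
  have E2 : G *m a1 = G *m a2 by rewrite -(GPhi a1) -(GPhi a2) E.
  apply/eqP; rewrite -subr_eq0 -mulmxBr; apply/eqP; apply: KG.
  by rewrite mulmxBr E2 subrr.
- move=> v Hv; exists (B *m v); first by exists v.
  by rewrite -!mulmxA BtB PYG P2'.
- move=> _ [a ->].
  rewrite -!mulmxA BtB PYG; congr (P *m F _).
  by rewrite [LHS]BtB -[LHS](GPhi a) !mulmxA.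
Qed.
End G.

Theorem mainTheorem10 (R : realType) (n : nat) (X : {set {set 'I_n}})
  (HX : simplicial_complex X) (d : nat) :
  (forall (F : 'cV[R]_#|Xv X d.+2| -> 'cV[R]_#|Xv X d.+2|)
          (P : 'M[R]_#|Xv X d.+2|),
     is_orth_proj P (colspace (bnd R X d.+1)^T) ->
     conjugate (colspace (bnd R X d.+1)) (colspace (bnd R X d.+1)^T)
       (fun th => bnd R X d.+1 *m F ((bnd R X d.+1)^T *m th))
       (fun x => ((bnd R X d.+1)^T *m bnd R X d.+1) *m F x)
     /\
     conjugate (colspace (bnd R X d.+1)) (colspace (bnd R X d.+1)^T)
       (fun th => bnd R X d.+1 *m F ((bnd R X d.+1)^T *m th))
       (fun y => P *m F (((bnd R X d.+1)^T *m bnd R X d.+1) *m y)))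
  /\
  (forall (H : 'cV[R]_#|Xv X d| -> 'cV[R]_#|Xv X d|)
          (Q : 'M[R]_#|Xv X d|),
     is_orth_proj Q (colspace (bnd R X d)) ->
     conjugate (colspace (bnd R X d)^T) (colspace (bnd R X d))
       (fun th => (bnd R X d)^T *m H (bnd R X d *m th))
       (fun x => (bnd R X d *m (bnd R X d)^T) *m H x)
     /\
     conjugate (colspace (bnd R X d)^T) (colspace (bnd R X d))
       (fun th => (bnd R X d)^T *m H (bnd R X d *m th))
       (fun y => Q *m H ((bnd R X d *m (bnd R X d)^T) *m y))).
Proof.
split.
  by move=> F P HP; apply: part.
move=> H Q HQ.
have := @part R _ _ (bnd R X d)^T H Q.
by rewrite trmxK; apply.
Qed.
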